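(* Let $d\geqslant1$, let $u_1,\dots,u_d\in\mathbb{Z}^d$ satisfy no nontrivial $\mathbb{Z}$-linear relation, let $\mathcal{L}=\mathbb{Z}u_1+\dots+\mathbb{Z}u_d$ and $P=\mathbb{N}u_1+\dots+\mathbb{N}u_d$. Then: (1) A subset $M\subseteq\mathbb{Z}^d$ is a complement of $P$ in $\mathbb{Z}^d$ if and only if for every coset $c$ of $\mathcal{L}$ in $\mathbb{Z}^d$ and every real number $N$ there exists $x\in M\cap c$ all of whose coordinates with respect to $u_1,\dots,u_d$ are $\leqslant N$. (2) $P$ has complements in $\mathbb{Z}^d$. (3) $P$ has no minimal complement in $\mathbb{Z}^d$. (4) No complement of $P$ in $\mathbb{Z}^d$ contains a minimal complement of $P$.
   Context: $\mathbb{N}=\{0,1,2,\dots\}$. Since $u_1,\dots,u_d$ form a $\mathbb{Q}$-basis of $\mathbb{Q}^d$, each $x\in\mathbb{Z}^d$ can be written uniquely as $x=t_1u_1+\dots+t_du_d$ with $t_i\in\mathbb{Q}$; the $t_i$ are its coordinates with respect to $u_1,\dots,u_d$. A nonempty set $M$ is a complement of $W$ in $\mathbb{Z}^d$ if $W+M=\mathbb{Z}^d$; it is minimal if no proper subset of $M$ is a complement of $W$. *)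

(* Defs.v *)
From HB Require Import structures.
From mathcomp Require Import all_boot all_order all_algebra.
From mathcomp Require Import reals.
Set Implicit Arguments. Unset Strict Implicit. Unset Printing Implicit Defensive.
Import Order.TTheory GRing.Theory Num.Theory.
Local Open Scope ring_scope.

Notation Zd d := 'rV[int]_d.

Definition Zfree (d : nat) (u : 'I_d -> Zd d) : Prop :=
  forall c : 'I_d -> int, \sum_i c i *: u i = 0 -> forall i, c i = 0.

Definition latt (d : nat) (u : 'I_d -> Zd d) (x : Zd d) : Prop :=
  exists c : 'I_d -> int, x = \sum_i c i *: u i.

Definition ncone (d : nat) (u : 'I_d -> Zd d) (x : Zd d) : Prop :=
  exists n : 'I_d -> nat, x = \sum_i (n i)%:Z *: u i.

(* All (rational) coordinates of x with respect to u_1..u_d are <= N.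
   Since u is a Q-basis, the coordinate vector t is unique. *)
Definition coords_le (R : realType) (d : nat) (u : 'I_d -> Zd d)
  (x : Zd d) (N : R) : Prop :=
  exists t : 'I_d -> rat,
    map_mx (intr : int -> rat) x = \sum_i t i *: map_mx (intr : int -> rat) (u i)
    /\ forall i, ratr (t i) <= N.

Definition complement (d : nat) (W M : Zd d -> Prop) : Prop :=
  (exists m, M m) /\ forall z : Zd d, exists w m, W w /\ M m /\ z = w + m.

Definition minimal_complement (d : nat) (W M : Zd d -> Prop) : Prop :=
  complement W M /\
  forall M' : Zd d -> Prop, (forall x, M' x -> M x) -> (exists x, M x /\ ~ M' x) ->
    ~ complement W M'.

(* Main.v *)
Require Import Defs.
From HB Require Import structures.
From mathcomp Require Import all_boot all_order all_algebra.
From mathcomp Require Import reals ring lra.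
Import Order.TTheory GRing.Theory Num.Theory.
Set Implicit Arguments. Unset Strict Implicit.
Local Open Scope ring_scope.

Definition qv d (x : 'rV[int]_d) : 'rV[rat]_d := map_mx (intr : int -> rat) x.
Definition Umx d (u : 'I_d -> 'rV[int]_d) : 'M[rat]_d := \matrix_(i, j) (u i 0 j)%:~R.

Lemma sum_rowE d (u : 'I_d -> 'rV[int]_d) (t : 'I_d -> rat) :
  \sum_i t i *: qv (u i) = (\row_i t i) *m Umx u.
Proof.
rewrite mulmx_sum_row; apply: eq_bigr => i _; rewrite mxE; congr (_ *: _).
by apply/rowP => j; rewrite !mxE.
Qed.

Lemma qv_sum d (u : 'I_d -> 'rV[int]_d) (c : 'I_d -> int) :
  qv (\sum_i c i *: u i) = \sum_i (c i)%:~R *: qv (u i).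
Proof.
apply/rowP => j; rewrite /qv !mxE !summxE rmorph_sum /=.
by apply: eq_bigr => i _; rewrite !mxE rmorphM.
Qed.

Lemma qvB d (x y : 'rV[int]_d) : qv (x - y) = qv x - qv y.
Proof. by apply/rowP => j; rewrite /qv !mxE rmorphB. Qed.

Lemma qv_inj d : injective (@qv d).
Proof.
move=> x y /rowP H; apply/rowP => j; move: (H j); rewrite /qv !mxE.
exact: intr_inj.
Qed.

Lemma Ufree d (u : 'I_d -> 'rV[int]_d) : Zfree u -> row_free (Umx u).
Proof.
move=> hu; apply/negPn/negP; rewrite -kermx_eq0 => /eqP hk.
have [i hi] : exists i, row i (kermx (Umx u)) != 0.
  apply/existsP; move/eqP: hk; apply: contraR; rewrite negb_exists => /forallP H.
  apply/eqP/row_matrixP => i; rewrite row0; exact/eqP/negPn/H.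
set r := row i (kermx (Umx u)) in hi.
have hr : r *m Umx u = 0 by rewrite /r -row_mul mulmx_ker row0.
pose c := fun k : 'I_d => numq (r 0 k) * \prod_(j | j != k) denq (r 0 j).
pose D := \prod_j denq (r 0 j).
have hc : forall k, (denq (r 0 k))%:~R != 0 :> rat ->  (c k)%:~R = D%:~R * r 0 k.
  move=> k hd; rewrite /c /D [X in _ = X%:~R * _](bigD1 k) //= !intrM.
  have e := divq_num_den (r 0 k); move: e hd; set n := numq _; set m := denq _ => e hd.
  rewrite -e; 
field; exact: hd.
have hc' : forall k, (c k)%:~R = D%:~R * r 0 k :> rat.
  by move=> k; apply: hc; rewrite intr_eq0 denq_neq0.
have hD : D != 0 by rewrite /D prodf_seq_neq0; apply/allP => j _; apply/implyP=> _; rewrite denq_neq0.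
have hs : \sum_k c k *: u k = 0.
  apply: qv_inj; rewrite qv_sum.
  under eq_bigr => l _ do rewrite hc' -scalerA.
  rewrite -scaler_sumr sum_rowE.
  have -> : \row_k r 0 k = r by apply/rowP => k; rewrite mxE.
  by rewrite hr scaler0; apply/rowP => j; rewrite !mxE.
have := hu c hs; move=> H0; apply/negP: hi; rewrite negbK; apply/eqP/rowP => k.
have := hc' k; rewrite H0 mxE => /esym /eqP; rewrite mulf_eq0 intr_eq0 (negbTE hD) /= => /eqP.
by move=> ->; rewrite mxE.
Qed.

Lemma coords_ex d (u : 'I_d -> 'rV[int]_d) : Zfree u ->
  forall x, exists t : 'I_d -> rat, qv x = \sum_i t i *: qv (u i).
Proof.
move=> hu x; have hU := Ufree hu; rewrite row_free_unit in hU.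
exists (fun i => (qv x *m invmx (Umx u)) 0 i); rewrite sum_rowE.
have -> : \row_i ((qv x *m invmx (Umx u)) 0 i) = qv x *m invmx (Umx u).
  by apply/rowP => i; rewrite mxE.
by rewrite mulmxKV.
Qed.

Lemma coords_uniq d (u : 'I_d -> 'rV[int]_d) : Zfree u ->
  forall t t' : 'I_d -> rat, \sum_i t i *: qv (u i) = \sum_i t' i *: qv (u i) ->
  forall i, t i = t' i.
Proof.
move=> hu t t'; rewrite !sum_rowE => /(row_free_inj (Ufree hu)) /rowP H i.
by have := H i; rewrite !mxE.
Qed.

Lemma qv_shift d (u : 'I_d -> 'rV[int]_d) x x0 (tz : 'I_d -> rat) (c : 'I_d -> int) :
  qv x0 = \sum_i tz i *: qv (u i) -> x - x0 = \sum_i c i *: u i ->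
  qv x = \sum_i (tz i + (c i)%:~R) *: qv (u i).
Proof.
move=> h1 h2; have : qv x = qv x0 + qv (x - x0) by rewrite qvB addrC subrK.
rewrite h2 qv_sum h1 -big_split /= => ->; apply: eq_bigr => i _; by rewrite scalerDl.
Qed.

Lemma compl_iff (R : realType) d (u : 'I_d -> 'rV[int]_d) (hu : Zfree u)
  (M : 'rV[int]_d -> Prop) :
     complement (ncone u) M <->
     (forall (x0 : 'rV[int]_d) (N : R),
        exists x, M x /\ latt u (x - x0) /\ coords_le u x N).
Proof.
split.
  move=> [[m0 _] hM] x0 N.
  have [tz htz] := coords_ex hu x0.
  pose S : R := \sum_i `|ratr (tz i)|.
  pose K := Num.bound (`|S - N|).
  have hK : S - N < K%:R := le_lt_trans (ler_norm _) (archi_boundP (normr_ge0 _)).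
  have [w [m [[n hn] [hm hz]]]] := hM (x0 - \sum_i (K%:Z) *: u i).
  exists m; split => //.
  have hl : m - x0 = \sum_i (- (K%:Z + (n i)%:Z)) *: u i.
    have -> : m = x0 - \sum_i K%:Z *: u i - w by rewrite hz (addrC w) addrK.
    rewrite hn [RHS](eq_bigr (fun i => -(K%:Z *: u i) - (n i)%:Z *: u i)); last first.
      by move=> i _; rewrite scaleNr scalerDl opprD.
    rewrite big_split /= sumrN sumrN.
    by rewrite [LHS]addrC !addrA addNr add0r.
  split; first by exists (fun i => - (K%:Z + (n i)%:Z)).
  exists (fun i => tz i + (- (K%:Z + (n i)%:Z))%:~R); split; first exact: qv_shift hl.
  move=> i; rewrite rmorphD /= ratr_int intrN intrD.
  have h1 : ratr (tz i) <= S.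
    apply: le_trans (ler_norm _) _; rewrite /S (bigD1 i) //= lerDl.
    by apply: sumr_ge0 => j _.
  have h2 : 0 <= (n i)%:Z%:~R :> R by rewrite ler0z.
  have h3 : (K%:Z)%:~R = K%:R :> R by [].
  rewrite h3; lra.
move=> H; split; first by have [x [hx _]] := H 0 0; exists x.
move=> z; have [tz htz] := coords_ex hu z.
pose S := \sum_i `|tz i|.
have [x [hx [[c hc] [tx [htx hN]]]]] := H z (ratr (- S)).
have hsh := qv_shift htz hc.
have heq := coords_uniq hu (etrans (esym htx) hsh).
have hc0 : forall i, c i <= 0.
  move=> i; have := hN i; rewrite ler_rat heq => h.
  have h1 : - S <= tz i.
    rewrite lerNl; apply: le_trans (_ : _ <= `|tz i|) _; first by rewrite -normrN ler_norm.
    rewrite /S (bigD1 i) //= lerDl; by apply: sumr_ge0 => j _.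
  rewrite -(lerz0 rat); lra.
exists (\sum_i (`|c i|%N)%:Z *: u i), x; split; first by exists (fun i => `|c i|%N).
split=> //.
under eq_bigr => i _ do rewrite lez0_abs ?hc0 // scaleNr.
by rewrite sumrN -hc opprB subrK.
Qed.

Lemma no_min (R : realType) d (hd : (0 < d)%N) (u : 'I_d -> 'rV[int]_d) (hu : Zfree u)
  (M' : 'rV[int]_d -> Prop) : ~ minimal_complement (ncone u) M'.
Proof.
move=> [hc hmin]; have [[m hm] _] := hc.
have [tm htm] := coords_ex hu m.
pose i0 := Ordinal hd.
apply: (hmin (fun x => M' x /\ x <> m)); first by move=> x [].
  by exists m; split => // -[].
apply/(compl_iff R hu) => x0 N.
have [x [hx [hl [tx [htx hN]]]]] :=
  (proj1 (compl_iff R hu M') hc) x0 (Num.min N (ratr (tm i0) - 1)).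
exists x; split; last split => //.
  split => // hxm; subst x.
  have e := coords_uniq hu (etrans (esym htx) htm) i0.
  have := hN i0; rewrite e le_min => /andP [_ h]; clear -h; lra.
exists tx; split => // i; apply: le_trans (hN i) _; by rewrite ge_min lexx.
Qed.

Theorem proposition3p3 (R : realType) (d : nat) (hd : (0 < d)%N)
  (u : 'I_d -> 'rV[int]_d) (hu : Zfree u) :
  (forall M : 'rV[int]_d -> Prop,
     complement (ncone u) M <->
     (forall (x0 : 'rV[int]_d) (N : R),
        exists x, M x /\ latt u (x - x0) /\ coords_le u x N))
  /\ (exists M : 'rV[int]_d -> Prop, complement (ncone u) M)
  /\ ~ (exists M : 'rV[int]_d -> Prop, minimal_complement (ncone u) M)
  /\ (forall M : 'rV[int]_d -> Prop, complement (ncone u) M ->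
        ~ (exists M' : 'rV[int]_d -> Prop,
             (forall x, M' x -> M x) /\ minimal_complement (ncone u) M')).
Proof.
split; first exact: compl_iff.
split.
  exists (fun _ => True); split; first by exists 0.
  move=> z; exists 0, z; split; last by rewrite add0r.
  by exists (fun _ => 0%N); rewrite big1 // => i _; rewrite scale0r.
split; first by move=> [M hM]; exact: (no_min R hd hu hM).
by move=> M _ [M' [_ hM']]; exact: (no_min R hd hu hM').
Qed.
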